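(* Let $C\ge 4$. There is a constant $K\ge1$ depending only on $C$ such that for every integer $N\ge 3$ and every $C$-uniformly convex sequence $\{a_n\}_{n=1}^N$, there exists a $C^2$ function $f$ on $[\frac1N,1]$ with $f(\frac nN)=a_n$ for $1\le n\le N$ and $K^{-1}\le f'(x)\le K$, $K^{-1}\le f''(x)\le K$ for all $x$ in its domain.
   Context: A real sequence $\{a_n\}_{n=1}^N$ is called $C$-uniformly convex if for all admissible $n$: $a_{n+1}-a_n\in[\frac{1}{CN},\frac{C}{N}]$ and $(a_{n+2}-a_{n+1})-(a_{n+1}-a_n)\in[\frac{1}{CN^2},\frac{C}{N^2}]$ (for $C=4$ this is the paper's notion of a uniformly convex sequence with parameter $N$). *)

(* Defs.v *)
From Stdlib Require Import Reals Lra Lia.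
From Coquelicot Require Import Coquelicot.
Open Scope R_scope.

Definition uniformly_convex (C : R) (N : nat) (a : nat -> R) : Prop :=
  (forall n : nat, (1 <= n)%nat -> (n + 1 <= N)%nat ->
      1 / (C * INR N) <= a (S n) - a n <= C / INR N) /\
  (forall n : nat, (1 <= n)%nat -> (n + 2 <= N)%nat ->
      1 / (C * INR N ^ 2) <= (a (S (S n)) - a (S n)) - (a (S n) - a n)
                          <= C / INR N ^ 2).

(* Main.v *)
Require Import Defs.
From Stdlib Require Import Reals Lra Lia ZArith.
From Coquelicot Require Import Coquelicot.
Open Scope R_scope.


Lemma glue_deriv (F P Q : R -> R) (c l d : R) : 0 < d ->
  (forall y, c - d < y < c -> F y = P y) ->
  (forall y, c <= y < c + d -> F y = Q y) ->
  P c = Q c -> is_derive P c l -> is_derive Q c l -> is_derive F c l.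
Proof.
  intros Hd HP HQ Hc DP DQ.
  apply is_derive_Reals in DP. apply is_derive_Reals in DQ.
  apply is_derive_Reals. intros eps He.
  destruct (DP eps He) as [d1 H1]. destruct (DQ eps He) as [d2 H2].
  assert (Hm : 0 < Rmin d (Rmin d1 d2)).
  { destruct d1, d2; simpl. repeat apply Rmin_pos; auto. }
  exists (mkposreal _ Hm). intros h Hh Hlt. simpl in Hlt.
  assert (Ha := Rmin_l d (Rmin d1 d2)). assert (Hb := Rmin_r d (Rmin d1 d2)).
  assert (Hb1 := Rmin_l d1 d2). assert (Hb2 := Rmin_r d1 d2).
  assert (HFc : F c = Q c) by (apply HQ; lra).
  destruct (Rlt_or_le h 0) as [Hn|Hp].
  - rewrite HP. 2:{ rewrite Rabs_left in Hlt; lra. }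
    rewrite HFc, <- Hc. apply H1; auto. lra.
  - rewrite HQ. 2:{ rewrite Rabs_right in Hlt; lra. }
    rewrite HFc. apply H2; auto. lra.
Qed.

Lemma glue_cont (F P Q : R -> R) (c d : R) : 0 < d ->
  (forall y, c - d < y < c -> F y = P y) ->
  (forall y, c <= y < c + d -> F y = Q y) ->
  P c = Q c -> continuous P c -> continuous Q c -> continuous F c.
Proof.
  intros Hd HP HQ Hc DP DQ.
  apply continuity_pt_filterlim in DP. apply continuity_pt_filterlim in DQ.
  apply continuity_pt_filterlim.
  unfold continuity_pt, continue_in, limit1_in, limit_in in *. simpl in *.
  unfold R_dist in *.
  intros eps He.
  destruct (DP eps He) as [d1 [H1p H1]]. destruct (DQ eps He) as [d2 [H2p H2]].
  exists (Rmin d (Rmin d1 d2)). split. { repeat apply Rmin_pos; auto. }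
  assert (Ha := Rmin_l d (Rmin d1 d2)). assert (Hb := Rmin_r d (Rmin d1 d2)).
  assert (Hb1 := Rmin_l d1 d2). assert (Hb2 := Rmin_r d1 d2).
  assert (HFc : F c = Q c) by (apply HQ; lra).
  intros y [[_ Hy] Hlt]. idtac.
  destruct (Rlt_or_le y c) as [Hn|Hp].
  - rewrite HP. 2:{ rewrite Rabs_left in Hlt; lra. }
    rewrite HFc, <- Hc. apply H1. split; [split; [exact I|auto]|lra].
  - rewrite HQ. 2:{ rewrite Rabs_right in Hlt; lra. }
    rewrite HFc. apply H2. split; [split; [exact I|auto]|lra].
Qed.

Definition raw (N:nat) (y:R) : nat := (Z.to_nat (up (y * INR N)) - 1)%nat.
Definition piece (N:nat) (y:R) : nat := Nat.max 1 (Nat.min (N-1) (raw N y)).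

Lemma raw_eq N m y : INR m <= y * INR N < INR m + 1 -> raw N y = m.
Proof.
  intros [H1 H2]. unfold raw.
  rewrite <- (tech_up (y*INR N) (Z.of_nat (S m))).
  - rewrite Nat2Z.id. lia.
  - rewrite <- INR_IZR_INZ, S_INR. lra.
  - rewrite <- INR_IZR_INZ, S_INR. lra.
Qed.

Lemma raw_spec N y : 0 <= y * INR N -> INR (raw N y) <= y * INR N < INR (raw N y) + 1.
Proof.
  intros H. destruct (archimed (y * INR N)) as [A1 A2].
  assert (Hz : (0 < up (y * INR N))%Z).
  { apply lt_IZR. simpl. lra. }
  unfold raw. rewrite minus_INR.
  2:{ lia. }
  rewrite INR_IZR_INZ, Z2Nat.id by lia. simpl. lra.
Qed.

Lemma piece_spec N x : (3 <= N)%nat -> 1 / INR N <= x <= 1 ->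
  (1 <= piece N x <= N - 1)%nat /\
  INR (piece N x) <= x * INR N <= INR (piece N x) + 1.
Proof.
  intros HN Hx.
  assert (HNp : 3 <= INR N) by (assert (H3 := le_INR 3 N HN); simpl in H3; lra).
  assert (Hr : 1 <= x * INR N <= INR N).
  { destruct Hx as [Hx1 Hx2]. split.
    - apply Rmult_le_compat_r with (r := INR N) in Hx1; [|lra].
      unfold Rdiv in Hx1. rewrite Rmult_1_l, Rinv_l in Hx1; lra.
    - nra. }
  destruct (raw_spec N x) as [R1 R2]; [lra|].
  assert (Hm1 : (1 <= raw N x)%nat).
  { destruct (raw N x) eqn:E; [simpl in R2; lra| lia]. }
  assert (HmN : (raw N x <= N)%nat).
  { apply INR_le. lra. }
  unfold piece.
  destruct (Nat.eq_dec (raw N x) N) as [E|E].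
  - rewrite E in *. replace (Nat.max 1 (Nat.min (N - 1) N)) with (N-1)%nat by lia.
    split; [lia|]. rewrite minus_INR by lia. simpl. lra.
  - replace (Nat.max 1 (Nat.min (N - 1) (raw N x))) with (raw N x) by lia.
    split; [lia|lra].
Qed.

Lemma local_structure N x : (3 <= N)%nat -> 1 / INR N <= x <= 1 ->
  exists d, 0 < d /\ exists i j : nat,
   (forall y, x - d < y < x -> piece N y = i) /\
   (forall y, x <= y < x + d -> piece N y = j) /\
   (i = j \/ (2 <= j <= N - 1 /\ i = j - 1)%nat /\ x = INR j / INR N).
Proof.
  intros HN Hx.
  assert (HNp : 3 <= INR N) by (assert (H3 := le_INR 3 N HN); simpl in H3; lra).
  assert (Hr : 1 <= x * INR N <= INR N).
  { destruct Hx as [Hx1 Hx2]. split.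
    - apply Rmult_le_compat_r with (r := INR N) in Hx1; [|lra].
      unfold Rdiv in Hx1. rewrite Rmult_1_l, Rinv_l in Hx1; lra.
    - nra. }
  destruct (raw_spec N x) as [R1 R2]; [lra|].
  set (m := raw N x) in *.
  assert (Hm1 : (1 <= m)%nat).
  { destruct m eqn:E; [simpl in R2; lra| lia]. }
  assert (HmN : (m <= N)%nat).
  { apply INR_le. lra. }
  destruct (Rle_lt_or_eq_dec _ _ R1) as [Rlt|Req].
  - set (d := Rmin (x * INR N - INR m) (INR m + 1 - x * INR N) / INR N).
    assert (Hd1 : d * INR N <= x * INR N - INR m).
    { unfold d. field_simplify; [apply Rmin_l|lra]. }
    assert (Hd2 : d * INR N <= INR m + 1 - x * INR N).
    { unfold d. field_simplify; [apply Rmin_r|lra]. }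
    assert (Hd : 0 < d).
    { unfold d. apply Rdiv_lt_0_compat; [|lra]. apply Rmin_pos; lra. }
    exists d. split; auto. exists (piece N x), (piece N x).
    split; [|split; [|left; auto]].
    + intros y Hy. unfold piece. rewrite (raw_eq N m y). reflexivity. nra.
    + intros y Hy. unfold piece. rewrite (raw_eq N m y). reflexivity. nra.
  - exists (1 / INR N). split. { apply Rdiv_lt_0_compat; lra. }
    exists (Nat.max 1 (Nat.min (N-1) (m-1))), (Nat.max 1 (Nat.min (N-1) m)).
    assert (Hx' : x = INR m / INR N). { rewrite Req. field. lra. }
    split; [|split].
    + intros y Hy. unfold piece. rewrite (raw_eq N (m-1) y). reflexivity.
      rewrite minus_INR by lia. simpl.
      assert (y * INR N < x * INR N) by nra.
      assert (x * INR N - 1 < y * INR N).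
      { replace (x * INR N - 1) with ((x - 1 / INR N) * INR N) by (field; lra). nra. }
      lra.
    + intros y Hy. unfold piece. rewrite (raw_eq N m y). reflexivity.
      assert (x * INR N <= y * INR N) by nra.
      assert (y * INR N < x * INR N + 1).
      { replace (x * INR N + 1) with ((x + 1 / INR N) * INR N) by (field; lra). nra. }
      lra.
    + destruct (Nat.eq_dec m 1) as [E1|E1]. { left. subst m. rewrite E1. lia. }
      destruct (Nat.eq_dec m N) as [E2|E2]. { left. rewrite E2. lia. }
      right. split; [lia|]. replace (Nat.max 1 (Nat.min (N - 1) m)) with m by lia. auto.
Qed.

Definition U2 (k:nat) (t:R) : R := let kk := INR k in
  (1-t)^(S (S k))/((kk+1)*(kk+2)) - (1-t)^(S (S (S k)))/((kk+2)*(kk+3))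
  - 1/((kk+1)*(kk+2)) + 1/((kk+2)*(kk+3)) + t/((kk+1)*(kk+2)).
Definition U1 (k:nat) (t:R) : R := let kk := INR k in
  -(1-t)^(S k)/(kk+1) + (1-t)^(S (S k))/(kk+2) + 1/((kk+1)*(kk+2)).
Definition U0 (k:nat) (t:R) : R := (1-t)^k - (1-t)^(S k).
Definition V2 (k:nat) (t:R) : R := let kk := INR k in
  t^(S (S k))/((kk+1)*(kk+2)) - t^(S (S (S k)))/((kk+2)*(kk+3)).
Definition V1 (k:nat) (t:R) : R := let kk := INR k in
  t^(S k)/(kk+1) - t^(S (S k))/(kk+2).
Definition V0 (k:nat) (t:R) : R := t^k - t^(S k).

Lemma der_powS m t : is_derive (fun t => t^(S m)) t (INR (S m) * t^m).
Proof.
  assert (H := is_derive_pow (fun t => t) (S m) t 1 (is_derive_id t)).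
  simpl in H. rewrite Rmult_1_r in H. exact H.
Qed.
Ltac fixINR k := change (match k with | 0%nat => 1 | S _ => INR k + 1 end) with (INR (S k)) in *; rewrite ?S_INR.
Ltac kpos k := assert (0 <= INR k) by apply pos_INR.

Lemma der_U2 k t : is_derive (U2 k) t (U1 k t).
Proof.
  unfold U2, U1. auto_derive. auto. fixINR k. kpos k. simpl. replace (1 + - t) with (1 - t) by ring. field. lra.
Qed.
Lemma der_U1 k t : is_derive (U1 k) t (U0 k t).
Proof.
  unfold U0, U1. auto_derive. auto. fixINR k. kpos k. simpl. replace (1 + - t) with (1 - t) by ring. field. lra.
Qed.
Lemma der_V2 k t : is_derive (V2 k) t (V1 k t).
Proof.
  unfold V2, V1. auto_derive. auto. fixINR k. kpos k. simpl. replace (1 + - t) with (1 - t) by ring. field. lra.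
Qed.
Lemma der_V1 k t : is_derive (V1 k) t (V0 k t).
Proof.
  unfold V0, V1. auto_derive. auto. fixINR k. kpos k. simpl. replace (1 + - t) with (1 - t) by ring. field. lra.
Qed.
Lemma ex_der_U0 k t : ex_derive (U0 k) t.
Proof. unfold U0. auto_derive. auto. Qed.
Lemma ex_der_V0 k t : ex_derive (V0 k) t.
Proof. unfold V0. auto_derive. auto. Qed.

Definition Sl (N:nat) (a:nat->R) (C:R) (n:nat) : R :=
  if Nat.leb n 1 then INR N * (a 2%nat - a 1%nat) - 1/(C*INR N)
  else if Nat.ltb n N then INR N * (a (n+1)%nat - a (n-1)%nat)/2
  else INR N * (a N - a (N-1)%nat) + INR N * (a N - 2 * a (N-1)%nat + a (N-2)%nat)/2.
Definition Am N a C n := INR N ^ 2 * (a (n+1)%nat - a n) - INR N * Sl N a C n.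
Definition Tm N a C n := INR N * (Sl N a C (n+1) - Sl N a C n).
Definition Bm N a C n := Tm N a C n - Am N a C n.
Definition mu (C:R) := 1/(2*C).
Definition pp (k:nat) := 1/((INR k+2)*(INR k+3)).
Definition qq (k:nat) := 1/((INR k+1)*(INR k+2)) - 1/((INR k+2)*(INR k+3)).
Definition al N a C k n := (pp k * (Am N a C n - mu C/2) - qq k * (Bm N a C n - mu C/2))/(pp k^2 - qq k^2).
Definition be N a C k n := (pp k * (Bm N a C n - mu C/2) - qq k * (Am N a C n - mu C/2))/(pp k^2 - qq k^2).
Definition Phi2 N a C k n t := mu C * t^2/2 + al N a C k n * U2 k t + be N a C k n * V2 k t.
Definition Phi1 N a C k n t := mu C * t + al N a C k n * U1 k t + be N a C k n * V1 k t.
Definition Phi0 N a C k n t := mu C + al N a C k n * U0 k t + be N a C k n * V0 k t.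
Definition tt (N n:nat) (x:R) := x * INR N - INR n.
Definition Q2 N a C k n t := a n + Sl N a C n * t / INR N + Phi2 N a C k n t / INR N ^ 2.
Definition Q1 N a C k n t := Sl N a C n + Phi1 N a C k n t / INR N.
Definition P2 N a C k n x := Q2 N a C k n (tt N n x).
Definition P1 N a C k n x := Q1 N a C k n (tt N n x).
Definition P0 N a C k n x := Phi0 N a C k n (tt N n x).

Ltac rq := match goal with |- @eq _ ?x ?y => change (@eq R x y) end.

Lemma chain (G G' : R -> R) (N n : nat) x : (forall t, is_derive G t (G' t)) ->
  is_derive (fun x => G (tt N n x)) x (INR N * G' (tt N n x)).
Proof.
  intros H. unfold tt.
  apply (is_derive_comp G (fun x => x * INR N - INR n)). apply H.
  auto_derive; auto. ring.
Qed.

Lemma der_cmul c F F' t : is_derive F t F' -> is_derive (fun t => c * F t) t (c * F').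
Proof. intros H. exact (is_derive_scal F t c F' H). Qed.
Lemma der_add F G F' G' t : is_derive F t F' -> is_derive G t G' -> is_derive (fun t => F t + G t) t (F' + G').
Proof. intros H1 H2. exact (is_derive_plus F G t F' G' H1 H2). Qed.

Lemma der_Phi2 N a C k n t : is_derive (Phi2 N a C k n) t (Phi1 N a C k n t).
Proof.
  unfold Phi2, Phi1. apply der_add. apply der_add.
  - auto_derive; auto. change RinvImpl.Rinv with Rinv. field.
  - apply der_cmul, der_U2.
  - apply der_cmul, der_V2.
Qed.
Lemma der_Phi1 N a C k n t : is_derive (Phi1 N a C k n) t (Phi0 N a C k n t).
Proof.
  unfold Phi0, Phi1. apply der_add. apply der_add.
  - auto_derive; auto. ring.
  - apply der_cmul, der_U1.
  - apply der_cmul, der_V1.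
Qed.
Lemma cont_Phi0 N a C k n t : continuous (Phi0 N a C k n) t.
Proof.
  apply (@ex_derive_continuous R_AbsRing R_NormedModule). unfold Phi0.
  destruct (ex_der_U0 k t) as [l1 H1]; destruct (ex_der_V0 k t) as [l2 H2].
  exists (0 + al N a C k n * l1 + be N a C k n * l2).
  apply der_add. apply der_add. (auto_derive; auto; ring).
  apply der_cmul; auto. apply der_cmul; auto.
Qed.

Lemma der_eq (f : R -> R) x l l' : is_derive f x l' -> l' = l -> is_derive f x l.
Proof. intros H ->. exact H. Qed.

Lemma der_P2 N a C k n x : (0 < N)%nat -> is_derive (P2 N a C k n) x (P1 N a C k n x).
Proof.
  intros HN. assert (0 < INR N) by (apply lt_0_INR; auto).
  unfold P2, P1.
  replace (Q1 N a C k n (tt N n x)) with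
    (INR N * (Sl N a C n / INR N + Phi1 N a C k n (tt N n x) / INR N ^ 2)).
  2:{ unfold Q1. field. lra. }
  apply (chain (Q2 N a C k n) (fun t => Sl N a C n / INR N + Phi1 N a C k n t / INR N ^ 2)).
  intros t. unfold Q2. eapply der_eq.
  { apply der_add. { auto_derive. auto. reflexivity. }
    apply (is_derive_ext (fun t => / INR N ^ 2 * Phi2 N a C k n t)).
    { intros s. rq. field. lra. }
    apply der_cmul, der_Phi2. }
  rq. change RinvImpl.Rinv with Rinv. field. lra.
Qed.
Lemma der_P1 N a C k n x : (0 < N)%nat -> is_derive (P1 N a C k n) x (P0 N a C k n x).
Proof.
  intros HN. assert (0 < INR N) by (apply lt_0_INR; auto).
  unfold P1, P0.
  replace (Phi0 N a C k n (tt N n x)) with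
    (INR N * (Phi0 N a C k n (tt N n x) / INR N)) by (field; lra).
  apply (chain (Q1 N a C k n) (fun t => Phi0 N a C k n t / INR N)).
  intros t. unfold Q1. eapply der_eq.
  { apply der_add. { auto_derive. auto. reflexivity. }
    apply (is_derive_ext (fun t => / INR N * Phi1 N a C k n t)).
    { intros s. rq. field. lra. }
    apply der_cmul, der_Phi1. }
  rq. change RinvImpl.Rinv with Rinv. field. lra.
Qed.
Lemma cont_P0 N a C k n x : continuous (P0 N a C k n) x.
Proof.
  unfold P0. apply (continuous_comp (tt N n) (Phi0 N a C k n)).
  - unfold tt. apply (@ex_derive_continuous R_AbsRing R_NormedModule). auto_derive. auto.
  - apply cont_Phi0.
Qed.

Ltac kp k := let H := fresh in assert (H : 0 <= INR k) by apply pos_INR.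

Lemma U_at0 k : (1 <= k)%nat -> U2 k 0 = 0 /\ U1 k 0 = 0 /\ U0 k 0 = 0 /\ V2 k 0 = 0 /\ V1 k 0 = 0 /\ V0 k 0 = 0.
Proof.
  intros Hk. kp k. unfold U2, U1, U0, V2, V1, V0.
  rewrite Rminus_0_r, !pow1, !pow_i by lia.
  repeat split; field; lra.
Qed.
Lemma U_at1 k : (1 <= k)%nat -> U2 k 1 = pp k /\ U1 k 1 = pp k + qq k /\ U0 k 1 = 0
   /\ V2 k 1 = qq k /\ V1 k 1 = pp k + qq k /\ V0 k 1 = 0.
Proof.
  intros Hk. kp k. unfold U2, U1, U0, V2, V1, V0, pp, qq.
  rewrite Rminus_diag, !pow1, !pow_i by lia.
  repeat split; field; lra.
Qed.

Lemma pq_pos k : (2 <= k)%nat -> 0 < pp k - qq k /\ 0 < pp k + qq k.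
Proof.
  intros Hk. assert (H2 := le_INR 2 k Hk). simpl in H2.
  unfold pp, qq.
  replace (1 / ((INR k + 2) * (INR k + 3)) - (1 / ((INR k + 1) * (INR k + 2)) - 1 / ((INR k + 2) * (INR k + 3))))
    with ((INR k - 1) / ((INR k + 1) * (INR k + 2) * (INR k + 3))) by (field; lra).
  replace (1 / ((INR k + 2) * (INR k + 3)) + (1 / ((INR k + 1) * (INR k + 2)) - 1 / ((INR k + 2) * (INR k + 3))))
    with (1 / ((INR k + 1) * (INR k + 2))) by (field; lra).
  split; apply Rdiv_lt_0_compat; try lra; repeat apply Rmult_lt_0_compat; lra.
Qed.

Lemma albe_eqs N a C k n : (2 <= k)%nat ->
  al N a C k n * pp k + be N a C k n * qq k = Am N a C n - mu C / 2 /\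
  al N a C k n * qq k + be N a C k n * pp k = Bm N a C n - mu C / 2.
Proof.
  intros Hk. destruct (pq_pos k Hk) as [H1 H2].
  assert (pp k ^ 2 - qq k ^ 2 <> 0).
  { replace (pp k ^ 2 - qq k ^ 2) with ((pp k - qq k) * (pp k + qq k)) by ring.
    apply Rgt_not_eq, Rmult_lt_0_compat; lra. }
  unfold al, be. split; field; auto.
Qed.

Lemma tt_node N j : (0 < N)%nat -> tt N j (INR j / INR N) = 0.
Proof. intros HN. assert (0 < INR N) by (apply lt_0_INR; auto). unfold tt. field. lra. Qed.
Lemma tt_node' N j : (0 < N)%nat -> (1 <= j)%nat -> tt N (j-1) (INR j / INR N) = 1.
Proof. intros HN Hj. assert (0 < INR N) by (apply lt_0_INR; auto). unfold tt.
  rewrite minus_INR by lia. simpl. field. lra. Qed.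

Lemma P2_right N a C k j : (0 < N)%nat -> (2 <= k)%nat -> P2 N a C k j (INR j / INR N) = a j.
Proof.
  intros HN Hk. unfold P2, Q2, Phi2. rewrite tt_node by auto.
  destruct (U_at0 k) as (E1&E2&E3&E4&E5&E6); [lia|]. rewrite E1, E4. field.
  apply not_0_INR; lia.
Qed.
Lemma P1_right N a C k j : (0 < N)%nat -> (2 <= k)%nat -> P1 N a C k j (INR j / INR N) = Sl N a C j.
Proof.
  intros HN Hk. unfold P1, Q1, Phi1. rewrite tt_node by auto.
  destruct (U_at0 k) as (E1&E2&E3&E4&E5&E6); [lia|]. rewrite E2, E5. field.
  apply not_0_INR; lia.
Qed.
Lemma P0_right N a C k j : (0 < N)%nat -> (2 <= k)%nat -> P0 N a C k j (INR j / INR N) = mu C.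
Proof.
  intros HN Hk. unfold P0, Phi0. rewrite tt_node by auto.
  destruct (U_at0 k) as (E1&E2&E3&E4&E5&E6); [lia|]. rewrite E3, E6. ring.
Qed.
Lemma P2_left N a C k j : (0 < N)%nat -> (2 <= k)%nat -> (1 <= j)%nat ->
  P2 N a C k (j-1) (INR j / INR N) = a j.
Proof.
  intros HN Hk Hj. assert (0 < INR N) by (apply lt_0_INR; auto).
  unfold P2, Q2, Phi2. rewrite tt_node' by auto.
  destruct (U_at1 k) as (E1&E2&E3&E4&E5&E6); [lia|]. rewrite E1, E4.
  destruct (albe_eqs N a C k (j-1) Hk) as [F1 F2].
  replace (mu C * 1 ^ 2 / 2 + al N a C k (j - 1) * pp k + be N a C k (j - 1) * qq k)
   with (Am N a C (j-1)) by lra.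
  unfold Am. replace (j - 1 + 1)%nat with j by lia. field. lra.
Qed.
Lemma P1_left N a C k j : (0 < N)%nat -> (2 <= k)%nat -> (1 <= j)%nat ->
  P1 N a C k (j-1) (INR j / INR N) = Sl N a C j.
Proof.
  intros HN Hk Hj. assert (0 < INR N) by (apply lt_0_INR; auto).
  unfold P1, Q1, Phi1. rewrite tt_node' by auto.
  destruct (U_at1 k) as (E1&E2&E3&E4&E5&E6); [lia|]. rewrite E2, E5.
  destruct (albe_eqs N a C k (j-1) Hk) as [F1 F2].
  replace (mu C * 1 + al N a C k (j - 1) * (pp k + qq k) + be N a C k (j - 1) * (pp k + qq k))
   with (Am N a C (j-1) + Bm N a C (j-1)) by lra.
  unfold Bm, Tm. replace (j - 1 + 1)%nat with j by lia. field. lra.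
Qed.
Lemma P0_left N a C k j : (0 < N)%nat -> (2 <= k)%nat -> (1 <= j)%nat ->
  P0 N a C k (j-1) (INR j / INR N) = mu C.
Proof.
  intros HN Hk Hj. unfold P0, Phi0. rewrite tt_node' by auto.
  destruct (U_at1 k) as (E1&E2&E3&E4&E5&E6); [lia|]. rewrite E3, E6. ring.
Qed.

Lemma glued_deriv (Pf Qf : nat -> R -> R) N : (3 <= N)%nat ->
  (forall n y, is_derive (Pf n) y (Qf n y)) ->
  (forall j, (2 <= j <= N - 1)%nat -> Pf (j-1)%nat (INR j / INR N) = Pf j (INR j / INR N) /\
       Qf (j-1)%nat (INR j / INR N) = Qf j (INR j / INR N)) ->
  forall x, 1 / INR N <= x <= 1 -> is_derive (fun y => Pf (piece N y) y) x (Qf (piece N x) x).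
Proof.
  intros HN HD HM x Hx.
  destruct (local_structure N x HN Hx) as [d [Hd [i [j [Hl [Hr Hij]]]]]].
  rewrite (Hr x) by lra.
  apply (glue_deriv _ (Pf i) (Pf j) x _ d Hd).
  - intros y Hy. rewrite (Hl y Hy). auto.
  - intros y Hy. rewrite (Hr y Hy). auto.
  - destruct Hij as [<-|[Hj Hx']]; auto. destruct Hj as [Hj ->]. rewrite Hx'. apply HM; auto.
  - destruct Hij as [<-|[Hj Hx']]; auto. destruct Hj as [Hj ->]. rewrite Hx'.
    destruct (HM j Hj) as [_ E]. rewrite <- E, <- Hx'. auto.
  - auto.
Qed.

Lemma glued_cont (Pf : nat -> R -> R) N : (3 <= N)%nat ->
  (forall n y, continuous (Pf n) y) ->
  (forall j, (2 <= j <= N - 1)%nat -> Pf (j-1)%nat (INR j / INR N) = Pf j (INR j / INR N)) ->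
  forall x, 1 / INR N <= x <= 1 -> continuous (fun y => Pf (piece N y) y) x.
Proof.
  intros HN HD HM x Hx.
  destruct (local_structure N x HN Hx) as [d [Hd [i [j [Hl [Hr Hij]]]]]].
  apply (glue_cont _ (Pf i) (Pf j) x d Hd).
  - intros y Hy. rewrite (Hl y Hy). auto.
  - intros y Hy. rewrite (Hr y Hy). auto.
  - destruct Hij as [<-|[Hj Hx']]; auto. destruct Hj as [Hj ->]. rewrite Hx'. apply HM; auto.
  - auto.
  - auto.
Qed.

Definition F2 N a C k x := P2 N a C k (piece N x) x.
Definition F1 N a C k x := P1 N a C k (piece N x) x.
Definition F0 N a C k x := P0 N a C k (piece N x) x.

Lemma F_derivs N a C k : (3 <= N)%nat -> (2 <= k)%nat -> forall x, 1 / INR N <= x <= 1 ->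
  is_derive (F2 N a C k) x (F1 N a C k x) /\ is_derive (F1 N a C k) x (F0 N a C k x) /\
  continuous (F0 N a C k) x.
Proof.
  intros HN Hk x Hx. split; [|split].
  - apply (glued_deriv (P2 N a C k) (P1 N a C k) N HN); auto.
    + intros; apply der_P2; lia.
    + intros j Hj. rewrite P2_left, P2_right, P1_left, P1_right by lia. auto.
  - apply (glued_deriv (P1 N a C k) (P0 N a C k) N HN); auto.
    + intros; apply der_P1; lia.
    + intros j Hj. rewrite P1_left, P1_right, P0_left, P0_right by lia. auto.
  - apply (glued_cont (P0 N a C k) N HN); auto.
    + intros; apply cont_P0.
    + intros j Hj. rewrite P0_left, P0_right by lia. auto.
Qed.

Lemma piece_node N j : (3 <= N)%nat -> (1 <= j <= N)%nat ->
  piece N (INR j / INR N) = if Nat.eqb j N then (N-1)%nat else j.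
Proof.
  intros HN Hj. assert (0 < INR N) by (apply lt_0_INR; lia).
  unfold piece. rewrite (raw_eq N j).
  - destruct (Nat.eqb_spec j N); lia.
  - replace (INR j / INR N * INR N) with (INR j) by (field; lra). lra.
Qed.

Lemma F2_node N a C k j : (3 <= N)%nat -> (2 <= k)%nat -> (1 <= j <= N)%nat ->
  F2 N a C k (INR j / INR N) = a j.
Proof.
  intros HN Hk Hj. unfold F2. rewrite piece_node by auto.
  destruct (Nat.eqb_spec j N) as [->|E].
  - apply P2_left; lia.
  - apply P2_right; lia.
Qed.
Lemma F1_node N a C k j : (3 <= N)%nat -> (2 <= k)%nat -> (1 <= j <= N)%nat ->
  F1 N a C k (INR j / INR N) = Sl N a C j.
Proof.
  intros HN Hk Hj. unfold F1. rewrite piece_node by auto.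
  destruct (Nat.eqb_spec j N) as [->|E].
  - apply P1_left; lia.
  - apply P1_right; lia.
Qed.

Definition Em N (a : nat -> R) m := INR N ^ 2 * (a (S (S m)) - 2 * a (S m) + a m).

Lemma Em_bounds C N a m : 0 < C -> (3 <= N)%nat -> uniformly_convex C N a ->
  (1 <= m)%nat -> (m + 2 <= N)%nat -> 1 / C <= Em N a m <= C.
Proof.
  intros HC HN [_ H2] Hm1 Hm2. assert (0 < INR N) by (apply lt_0_INR; lia).
  destruct (H2 m Hm1 Hm2) as [L U]. unfold Em.
  assert (0 < INR N ^ 2) by (apply pow_lt; lra).
  split.
  - apply Rmult_le_compat_l with (r := INR N ^ 2) in L; [|lra].
    replace (INR N ^ 2 * (1 / (C * INR N ^ 2))) with (1 / C) in L by (field; lra).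
    lra.
  - apply Rmult_le_compat_l with (r := INR N ^ 2) in U; [|lra].
    replace (INR N ^ 2 * (C / INR N ^ 2)) with C in U by (field; lra).
    lra.
Qed.

Lemma Sl_1 N a C : Sl N a C 1 = INR N * (a 2%nat - a 1%nat) - 1/(C*INR N).
Proof. reflexivity. Qed.
Lemma Sl_mid N a C n : (2 <= n)%nat -> (n < N)%nat -> Sl N a C n = INR N * (a (n+1)%nat - a (n-1)%nat)/2.
Proof.
  intros H1 H2. unfold Sl. destruct (Nat.leb_spec n 1); [lia|].
  destruct (Nat.ltb_spec n N); [auto|lia].
Qed.
Lemma Sl_N N a C : (2 <= N)%nat -> Sl N a C N =
  INR N * (a N - a (N-1)%nat) + INR N * (a N - 2 * a (N-1)%nat + a (N-2)%nat)/2.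
Proof.
  intros H1. unfold Sl. destruct (Nat.leb_spec N 1); [lia|].
  destruct (Nat.ltb_spec N N); [lia|auto].
Qed.

Lemma AB_exact N a C n : (3 <= N)%nat -> (1 <= n <= N - 1)%nat ->
  (n = 1%nat /\ Am N a C n = 1 / C \/ n <> 1%nat /\ Am N a C n = Em N a (n-1) / 2) /\
  ((n + 1 < N)%nat /\ Bm N a C n = Em N a n / 2 \/ (n + 1 = N)%nat /\ Bm N a C n = Em N a (n-1) / 2).
Proof.
  intros HN Hn. assert (0 < INR N) by (apply lt_0_INR; lia).
  assert (HC : C <> 0 \/ C = 0) by (destruct (Req_dec C 0); auto).
  assert (HB : Bm N a C n = INR N * Sl N a C (n+1) - INR N ^ 2 * (a (n+1)%nat - a n)).
  { unfold Bm, Tm, Am. ring. }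
  split.
  - destruct (Nat.eq_dec n 1) as [->|E].
    + left. split; auto. unfold Am. rewrite Sl_1. simpl (1+1)%nat.
      destruct HC as [HC|HC]. field. split; lra. subst C. unfold Rdiv. rewrite !Rmult_0_l, Rinv_0. ring.
    + right. split; auto. unfold Am. rewrite Sl_mid by lia. destruct n as [|m]; [lia|].
      replace (S m - 1)%nat with m by lia. replace (S m + 1)%nat with (S (S m)) by lia.
      unfold Em. field.
  - rewrite HB. destruct (Nat.eq_dec (n+1) N) as [E|E].
    + right. split; auto. rewrite E, Sl_N by lia.
      destruct n as [|m]; [lia|]. replace (S m - 1)%nat with m by lia.
      subst N. replace (S m + 1 - 1)%nat with (S m) by lia.
      replace (S m + 1 - 2)%nat with m by lia. replace (S m + 1)%nat with (S (S m)) by lia.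
      unfold Em. field.
    + left. split; [lia|]. rewrite Sl_mid by lia.
      replace (n + 1 + 1)%nat with (S (S n)) by lia. replace (n + 1 - 1)%nat with n by lia.
      replace (n + 1)%nat with (S n) by lia. unfold Em. field.
Qed.

Lemma AB_bounds N a C n : 4 <= C -> (3 <= N)%nat -> uniformly_convex C N a -> (1 <= n <= N - 1)%nat ->
  1 / (2*C) <= Am N a C n <= C / 2 /\ 1 / (2*C) <= Bm N a C n <= C / 2.
Proof.
  intros HC HN HU Hn.
  assert (HCi : 1 / (2 * C) = (1 / C) / 2) by (field; lra).
  assert (HC1 : 0 < 1 / C <= 1/4).
  { split. apply Rdiv_lt_0_compat; lra. unfold Rdiv. rewrite !Rmult_1_l. apply Rinv_le_contravar; lra. }
  rewrite HCi.
  destruct (AB_exact N a C n HN Hn) as [HA HB]. split.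
  - destruct HA as [[_ A]|[E A]]; rewrite A.
    + split; lra.
    + assert (h := Em_bounds C N a (n-1) ltac:(lra) HN HU ltac:(lia) ltac:(lia)). split; lra.
  - destruct HB as [[E B]|[E B]]; rewrite B.
    + assert (h := Em_bounds C N a n ltac:(lra) HN HU ltac:(lia) ltac:(lia)). split; lra.
    + assert (h := Em_bounds C N a (n-1) ltac:(lra) HN HU ltac:(lia) ltac:(lia)). split; lra.
Qed.

Definition JJ k := (INR k + 1) * (INR k + 2) * (INR k + 3).

Lemma pow_01 x m : 0 <= x <= 1 -> 0 <= x ^ m <= 1.
Proof.
  intros Hx. induction m; simpl. lra. split. apply Rmult_le_pos; lra.
  replace 1 with (1 * 1) by ring. apply Rmult_le_compat; lra.
Qed.

Lemma pq_J k : pp k = (INR k + 1) / JJ k /\ qq k = 2 / JJ k.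
Proof. assert (H := pos_INR k). unfold pp, qq, JJ. split; field; lra. Qed.

Lemma al_eq N a C k n : (2 <= k)%nat -> al N a C k n =
  JJ k * ((INR k + 1) * (Am N a C n - mu C / 2) - 2 * (Bm N a C n - mu C / 2)) / ((INR k - 1) * (INR k + 3)).
Proof.
  intros Hk. assert (H2 := le_INR 2 k Hk). simpl in H2.
  assert (0 < JJ k) by (unfold JJ; repeat apply Rmult_lt_0_compat; lra).
  unfold al. destruct (pq_J k) as [-> ->].
  replace (((INR k + 1) / JJ k) ^ 2 - (2 / JJ k) ^ 2) with ((INR k - 1) * (INR k + 3) / JJ k ^ 2) by (field; lra).
  field. repeat split; lra.
Qed.
Lemma be_eq N a C k n : (2 <= k)%nat -> be N a C k n =
  JJ k * ((INR k + 1) * (Bm N a C n - mu C / 2) - 2 * (Am N a C n - mu C / 2)) / ((INR k - 1) * (INR k + 3)).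
Proof.
  intros Hk. assert (H2 := le_INR 2 k Hk). simpl in H2.
  assert (0 < JJ k) by (unfold JJ; repeat apply Rmult_lt_0_compat; lra).
  unfold be. destruct (pq_J k) as [-> ->].
  replace (((INR k + 1) / JJ k) ^ 2 - (2 / JJ k) ^ 2) with ((INR k - 1) * (INR k + 3) / JJ k ^ 2) by (field; lra).
  field. repeat split; lra.
Qed.

Lemma coef_bound (C kk J X Y : R) : 4 <= C -> 4 * C * C <= kk -> 0 < J ->
  1 / (2*C) <= X <= C / 2 -> 1 / (2*C) <= Y <= C / 2 ->
  0 <= J * ((kk + 1) * (X - 1/(2*C) / 2) - 2 * (Y - 1/(2*C) / 2)) / ((kk - 1) * (kk + 3)) <= J * C / 2.
Proof.
  intros HC Hk HJ HX HY.
  set (X' := X - 1/(2*C)/2). set (Y' := Y - 1/(2*C)/2).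
  assert (E : 1/(2*C)/2 = 1/(4*C)) by (field; lra).
  assert (HX' : 1 <= 4 * C * X').
  { unfold X'. rewrite E. replace (4 * C * (X - 1 / (4 * C))) with (4*C*X - 1) by (field; lra).
    assert (1/(2*C) * (4*C) = 2) by (field; lra). nra. }
  assert (HX'u : X' <= C / 2) by (unfold X'; rewrite E; assert (0 < 1/(4*C)) by (apply Rdiv_lt_0_compat; lra); lra).
  assert (HY'u : Y' <= C / 2) by (unfold Y'; rewrite E; assert (0 < 1/(4*C)) by (apply Rdiv_lt_0_compat; lra); lra).
  assert (HY'l : 0 <= Y').
  { unfold Y'. rewrite E. assert (1/(4*C) <= 1/(2*C)). { unfold Rdiv. rewrite !Rmult_1_l. apply Rinv_le_contravar; lra. } lra. }
  assert (Hkk : 64 <= kk) by nra.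
  assert (Hden : 0 < (kk - 1) * (kk + 3)) by nra.
  assert (Hnum : 0 <= (kk + 1) * X' - 2 * Y').
  { assert (kk * X' >= C) by nra. nra. }
  split.
  - apply Rmult_le_pos; [apply Rmult_le_pos; lra|]. left; apply Rinv_0_lt_compat; lra.
  - replace (J * ((kk + 1) * X' - 2 * Y') / ((kk - 1) * (kk + 3))) with (J * (((kk + 1) * X' - 2 * Y') / ((kk - 1) * (kk + 3)))) by (field; lra).
    replace (J * C / 2) with (J * (C / 2)) by field.
    apply Rmult_le_compat_l; [lra|].
    unfold Rdiv at 1. apply Rmult_le_reg_r with ((kk - 1) * (kk + 3)); [lra|].
    rewrite Rmult_assoc, Rinv_l, Rmult_1_r by lra.
    assert (0 <= X') by nra.
    assert (kk + 1 <= (kk - 1) * (kk + 3)) by nra.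
    assert ((kk+1) * X' <= (kk+1) * (C/2)) by (apply Rmult_le_compat_l; lra).
    nra.
Qed.

Lemma k_ge2 C k : 4 <= C -> 4 * C * C <= INR k -> (2 <= k)%nat.
Proof. intros HC Hk. destruct k as [|[|k]]; simpl in Hk; try nra. lia. Qed.

Lemma Phi0_bounds N a C k n t : 4 <= C -> (3 <= N)%nat -> uniformly_convex C N a ->
  (1 <= n <= N - 1)%nat -> 4 * C * C <= INR k -> 0 <= t <= 1 ->
  mu C <= Phi0 N a C k n t <= mu C + JJ k * C.
Proof.
  intros HC HN HU Hn Hk Ht.
  assert (Hk2 := k_ge2 C k HC Hk).
  assert (HJ : 0 < JJ k) by (unfold JJ; assert (H := pos_INR k); repeat apply Rmult_lt_0_compat; lra).
  destruct (AB_bounds N a C n HC HN HU Hn) as [HA HB].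
  assert (Ha := coef_bound C (INR k) (JJ k) _ _ HC Hk HJ HA HB).
  assert (Hb := coef_bound C (INR k) (JJ k) _ _ HC Hk HJ HB HA).
  change (1 / (2 * C)) with (mu C) in Ha, Hb.
  rewrite <- (al_eq N a C k n Hk2) in Ha. rewrite <- (be_eq N a C k n Hk2) in Hb.
  assert (HU0 : 0 <= U0 k t <= 1).
  { unfold U0. simpl. replace ((1 - t) ^ k - (1 - t) * (1 - t) ^ k) with ((1-t)^k * t) by ring.
    assert (h := pow_01 (1-t) k ltac:(lra)). split. nra. nra. }
  assert (HV0 : 0 <= V0 k t <= 1).
  { unfold V0. simpl. replace (t ^ k - t * t ^ k) with (t^k * (1-t)) by ring.
    assert (h := pow_01 t k ltac:(lra)). split. nra. nra. }
  unfold Phi0. split. nra. nra.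
Qed.

Lemma mono_MVT (f df : R -> R) (lo hi : R) :
  (forall y, lo <= y <= hi -> is_derive f y (df y)) ->
  (forall y, lo <= y <= hi -> 0 <= df y) ->
  forall u v, lo <= u <= v -> v <= hi -> f u <= f v.
Proof.
  intros HD HP u v Huv Hv.
  destruct (MVT_gen f u v df) as [c [Hc E]].
  - intros y Hy. rewrite Rmin_left, Rmax_right in Hy by lra. apply HD; lra.
  - intros y Hy. rewrite Rmin_left, Rmax_right in Hy by lra.
    apply continuity_pt_filterlim. apply (@ex_derive_continuous R_AbsRing R_NormedModule).
    exists (df y). apply HD; lra.
  - rewrite Rmin_left, Rmax_right in Hc by lra.
    assert (0 <= df c) by (apply HP; lra).
    assert (0 <= df c * (v - u)) by (apply Rmult_le_pos; lra). lra.
Qed.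

Lemma Sl1_lb N a C : 4 <= C -> (3 <= N)%nat -> uniformly_convex C N a -> 2 / (3 * C) <= Sl N a C 1.
Proof.
  intros HC HN [H1 _]. rewrite Sl_1.
  assert (HNp : 3 <= INR N) by (assert (H3 := le_INR 3 N HN); simpl in H3; lra).
  destruct (H1 1%nat ltac:(lia) ltac:(lia)) as [L _]. simpl (S 1) in L.
  apply Rmult_le_compat_l with (r := INR N) in L; [|lra].
  replace (INR N * (1 / (C * INR N))) with (1 / C) in L by (field; lra).
  assert (1 / (C * INR N) <= 1 / (3 * C)).
  { unfold Rdiv. rewrite !Rmult_1_l. apply Rinv_le_contravar; nra. }
  replace (2 / (3 * C)) with (1 / C - 1 / (3 * C)) by (field; lra). lra.
Qed.

Lemma SlN_ub N a C : 4 <= C -> (3 <= N)%nat -> uniformly_convex C N a -> Sl N a C N <= 2 * C.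
Proof.
  intros HC HN [H1 H2]. rewrite Sl_N by lia.
  assert (HNp : 3 <= INR N) by (assert (H3 := le_INR 3 N HN); simpl in H3; lra).
  destruct (H1 (N-1)%nat ltac:(lia) ltac:(lia)) as [_ U1].
  destruct (H2 (N-2)%nat ltac:(lia) ltac:(lia)) as [_ U2].
  replace (S (N-1)) with N in U1 by lia.
  replace (S (S (N-2))) with N in U2 by lia. replace (S (N-2)) with (N-1)%nat in U2 by lia.
  apply Rmult_le_compat_l with (r := INR N) in U1; [|lra].
  replace (INR N * (C / INR N)) with C in U1 by (field; lra).
  apply Rmult_le_compat_l with (r := INR N) in U2; [|lra].
  replace (INR N * (C / INR N ^ 2)) with (C / INR N) in U2 by (field; lra).
  assert (C / INR N <= C) by (unfold Rdiv; apply Rmult_le_reg_r with (INR N); [lra|];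
     rewrite Rmult_assoc, Rinv_l by lra; nra).
  lra.
Qed.

Theorem corollary1 :
  forall C : R, 4 <= C ->
  exists K : R, 1 <= K /\
    forall (N : nat) (a : nat -> R),
      (3 <= N)%nat ->
      uniformly_convex C N a ->
      exists f f1 f2 : R -> R,
        (forall x, 1 / INR N <= x <= 1 ->
           is_derive f x (f1 x) /\ is_derive f1 x (f2 x) /\ continuous f2 x) /\
        (forall n : nat, (1 <= n)%nat -> (n <= N)%nat -> f (INR n / INR N) = a n) /\
        (forall x, 1 / INR N <= x <= 1 ->
           / K <= f1 x <= K /\ / K <= f2 x <= K).
Proof.
  intros C HC.
  destruct (INR_unbounded (4 * C * C)) as [k Hk].
  assert (Hk' : 4 * C * C <= INR k) by lra.
  assert (Hk2 := k_ge2 C k HC Hk').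
  assert (HJ : 0 < JJ k) by (unfold JJ; assert (H := pos_INR k); repeat apply Rmult_lt_0_compat; lra).
  assert (HJC : 0 < JJ k * C) by (apply Rmult_lt_0_compat; lra).
  set (K := 2 * C + JJ k * C + 1).
  assert (HKi : / K <= / (2 * C)) by (apply Rinv_le_contravar; unfold K; lra).
  exists K. split. { unfold K. lra. }
  intros N a HN HU.
  assert (HNp : 3 <= INR N) by (assert (H3 := le_INR 3 N HN); simpl in H3; lra).
  exists (F2 N a C k), (F1 N a C k), (F0 N a C k).
  assert (HF0 : forall x, 1 / INR N <= x <= 1 -> mu C <= F0 N a C k x <= mu C + JJ k * C).
  { intros x Hx. destruct (piece_spec N x HN Hx) as [Hn Ht].
    unfold F0, P0. apply Phi0_bounds; auto. unfold tt. lra. }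
  assert (Hmu : mu C = / (2 * C)) by (unfold mu; field; lra).
  assert (Hmu8 : mu C <= 1) by (rewrite Hmu; rewrite <- Rinv_1; apply Rinv_le_contravar; lra).
  split; [|split].
  - intros x Hx. apply F_derivs; auto.
  - intros n H1 H2. apply F2_node; auto.
  - intros x Hx. split.
    + assert (Hm := mono_MVT (F1 N a C k) (F0 N a C k) (1 / INR N) 1).
      assert (HD : forall y, 1 / INR N <= y <= 1 -> is_derive (F1 N a C k) y (F0 N a C k y)).
      { intros y Hy. apply F_derivs; auto. }
      assert (HP : forall y, 1 / INR N <= y <= 1 -> 0 <= F0 N a C k y).
      { intros y Hy. destruct (HF0 y Hy). assert (0 < mu C) by (rewrite Hmu; apply Rinv_0_lt_compat; lra). lra. }
      assert (L := Hm HD HP (1 / INR N) x ltac:(lra) ltac:(lra)).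
      assert (U := Hm HD HP x 1 ltac:(lra) ltac:(lra)).
      replace (1 / INR N) with (INR 1 / INR N) in L at 1 by reflexivity.
      rewrite F1_node in L by (auto; lia).
      assert (E1 : F1 N a C k 1 = Sl N a C N).
      { rewrite <- (F1_node N a C k N) by (auto; lia). f_equal. field. lra. }
      rewrite E1 in U.
      assert (S1 := Sl1_lb N a C HC HN HU). assert (SN := SlN_ub N a C HC HN HU).
      assert (/ K <= 2 / (3 * C)).
      { replace (2 / (3 * C)) with (/ (3 * C / 2)) by (field; lra). apply Rinv_le_contravar; unfold K; lra. }
      unfold K in *. split; lra.
    + destruct (HF0 x Hx). rewrite Hmu in *. unfold K in *. split; lra.
Qed.
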